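(* Let $q:\mathbb{D}\to\mathbb{C}$, $q(z)=\frac{|1-z|^2}{1-|z|^2}$, and let $g,\tilde g$ be entire functions. Then for all $n\ge0$ and $z\in\mathbb{D}$, $$D^n(g\circ q)(z)=(-1)^n\frac{(1-\bar z)^{2n}}{(1-|z|^2)^n}(g^{(n)}\circ q)(z),\qquad \overline{D}^n(g\circ q)(z)=(-1)^n\frac{(1-z)^{2n}}{(1-|z|^2)^n}(g^{(n)}\circ q)(z),$$ and consequently $\overline{D}^n(g\circ q)\,D^n(\tilde g\circ q)=q^{2n}\,(g^{(n)}\circ q)\,(\tilde g^{(n)}\circ q)$.
   Context: $\mathbb{D}=\{z\in\mathbb{C}:|z|<1\}$. Peschl–Minda derivatives: for $z\in\mathbb{D}$ let $T_z(u)=(z+u)/(1+\bar z u)$; with $\partial=\frac12(\partial_x-i\partial_y)$ the Wirtinger derivative, for smooth $f:\mathbb{D}\to\mathbb{C}$ set $D^nf(z):=\partial_u^n(f\circ T_z)(0)$ and $\overline{D}^nf(z):=\overline{D^n(\bar f)(z)}$. (One has $D^{n+1}f(z)=(1-|z|^2)\,\partial^{n+1}\big[(1-|z|^2)^nf(z)\big]$.) *)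

(* Defs.v *)
From Stdlib Require Import Reals.
From Coquelicot Require Export Coquelicot.
Open Scope C_scope.

Definition dX (h : C -> C) (u : C) : C :=
  (Derive (fun t => Re (h (u + RtoC t))) 0%R,
   Derive (fun t => Im (h (u + RtoC t))) 0%R).
Definition dY (h : C -> C) (u : C) : C :=
  (Derive (fun t => Re (h (u + Ci * RtoC t))) 0%R,
   Derive (fun t => Im (h (u + Ci * RtoC t))) 0%R).

Definition wirt (h : C -> C) : C -> C := fun u => / 2 * (dX h u - Ci * dY h u).
Definition wirt_n (n : nat) (h : C -> C) : C -> C := Nat.iter n wirt h.

Definition Tz (z u : C) : C := (z + u) / (1 + Cconj z * u).

Definition PM (n : nat) (f : C -> C) (z : C) : C := wirt_n n (fun u => f (Tz z u)) 0.
Definition PMbar (n : nat) (f : C -> C) (z : C) : C :=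
  Cconj (PM n (fun w => Cconj (f w)) z).

Definition Cderiv_n (n : nat) (g : C -> C) : C -> C := Nat.iter n C_derive g.

Definition entire (g : C -> C) : Prop :=
  forall n z, ex_derive (K := C_AbsRing) (Cderiv_n n g) z.

Definition qfun (z : C) : C := RtoC ((Cmod (1 - z)) ^ 2 / (1 - (Cmod z) ^ 2))%R.

(* Main.v *)
Require Import Defs.
From Stdlib Require Import Reals Lra Lia.
From Coquelicot Require Import Coquelicot.
Open Scope C_scope.

Definition isdC (f : R -> C) (t : R) (d : C) :=
  is_derive (K:=R_AbsRing) (V:=C_R_NormedModule) f t d.

Lemma isdC_fst f t d : isdC f t d -> is_derive (fun s => fst (f s)) t (fst d).
Proof.
  intro H. unfold isdC, is_derive in *.
  pose proof (@filterdiff_comp R_AbsRing R_NormedModule C_R_NormedModule R_NormedModule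
     (locally t) _ f (fun p => fst p) _ (fun p => fst p) H
     (filterdiff_linear _ (is_linear_fst (U:=R_NormedModule) (V:=R_NormedModule)))) as H2.
  eapply filterdiff_ext_lin. exact H2. intros y. reflexivity.
Qed.
Lemma isdC_snd f t d : isdC f t d -> is_derive (fun s => snd (f s)) t (snd d).
Proof.
  intro H. unfold isdC, is_derive in *.
  pose proof (@filterdiff_comp R_AbsRing R_NormedModule C_R_NormedModule R_NormedModule
     (locally t) _ f (fun p => snd p) _ (fun p => snd p) H
     (filterdiff_linear _ (is_linear_snd (U:=R_NormedModule) (V:=R_NormedModule)))) as H2.
  eapply filterdiff_ext_lin. exact H2. intros y. reflexivity.
Qed.
Lemma isdC_intro f t d : is_derive (fun s => fst (f s)) t (fst d) ->
  is_derive (fun s => snd (f s)) t (snd d) -> isdC f t d.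
Proof.
  intros H1 H2. unfold isdC, is_derive in *.
  pose proof (@filterdiff_comp'_2 R_AbsRing R_NormedModule R_NormedModule R_NormedModule C_R_NormedModule
    (fun s => fst (f s)) (fun s => snd (f s)) (fun a b => (a,b)) t _ _ (fun a b => (a,b)) H1 H2) as H3.
  assert (HL : filterdiff (K:=R_AbsRing) (fun t0 : prod_NormedModule R_AbsRing R_NormedModule R_NormedModule =>
     ((fst t0, snd t0) : C_R_NormedModule)) (locally (fst (f t), snd (f t)))
     (fun t0 => ((fst t0, snd t0) : C_R_NormedModule))).
  { apply filterdiff_linear. split.
    - intros x y. reflexivity.
    - intros k x. reflexivity.
    - exists 1%R. split. lra. intros [x1 x2]. rewrite Rmult_1_l. apply Rle_refl. }
  specialize (H3 HL).
  eapply filterdiff_ext_lin.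
  - eapply filterdiff_ext. 2: exact H3. intros s. simpl. destruct (f s); reflexivity.
  - intros y. simpl. destruct d. reflexivity.
Qed.

Lemma norm_CR (x : C) : @norm R_AbsRing C_R_NormedModule x = Cmod x.
Proof.
  destruct x as [x1 x2]. change (prod_norm (K:=R_AbsRing) (U:=R_NormedModule) (V:=R_NormedModule) (x1,x2) = Cmod (x1,x2)).
  unfold prod_norm, Cmod; cbn [fst snd]. f_equal.
  change (Rabs x1 ^ 2 + Rabs x2 ^ 2 = x1 ^ 2 + x2 ^ 2)%R.
  rewrite <- !Rsqr_pow2, <- !Rsqr_abs. reflexivity.
Qed.

Lemma CtoR g w a : is_derive (K:=C_AbsRing) g w a ->
  filterdiff (K:=R_AbsRing) (U:=C_R_NormedModule) (V:=C_R_NormedModule) g (@locally C_UniformSpace w) (fun h => h * a).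
Proof.
  intros [HL HD]. split.
  - split.
    + intros [x1 x2] [y1 y2]. destruct a as [a1 a2]. apply injective_projections; cbn; ring.
    + intros k [x1 x2]. destruct a as [a1 a2]. apply injective_projections; cbn; ring.
    + exists (Cmod a + 1)%R. split. pose proof (Cmod_ge_0 a). lra.
      intros x. rewrite !norm_CR. rewrite Cmod_mult. pose proof (Cmod_ge_0 a). pose proof (Cmod_ge_0 x). nra.
  - intros x Hx. 
    assert (x = w). { symmetry. apply (is_filter_lim_locally_unique (K:=R_AbsRing) (V:=C_R_NormedModule)). exact Hx. }
    subst x. specialize (HD w (fun P H => H)).
    intros eps. specialize (HD eps). apply locally_C.
    eapply filter_imp. 2: exact HD. intros y Hy. rewrite !norm_CR.
    exact Hy.
Qed.

Lemma chain (g : C -> C) a (γ : R -> C) t d :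
  is_derive (K:=C_AbsRing) g (γ t) a -> isdC γ t d -> isdC (fun s => g (γ s)) t (a * d).
Proof.
  intros Hg Hγ. unfold isdC, is_derive in *.
  pose proof (CtoR _ _ _ Hg) as Hg'.
  pose proof (@filterdiff_comp' R_AbsRing R_NormedModule C_R_NormedModule C_R_NormedModule γ g t _ _ Hγ Hg') as H.
  eapply filterdiff_ext_lin. exact H. intros y. simpl.
  destruct d as [d1 d2], a as [a1 a2]. apply injective_projections; cbn; ring.
Qed.

Lemma isdR_eq (f : R -> R) x l l' : is_derive f x l -> l = l' -> is_derive f x l'.
Proof. intros H ->; exact H. Qed.

Lemma isdC_eq f x l l' : isdC f x l -> l = l' -> isdC f x l'.
Proof. intros H ->; exact H. Qed.

Lemma isdC_ext f g x l : (forall s, f s = g s) -> isdC f x l -> isdC g x l.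
Proof. intros He H. unfold isdC in *. eapply is_derive_ext. exact He. exact H. Qed.

Lemma isdC_plus F G t dF dG : isdC F t dF -> isdC G t dG -> isdC (fun s => F s + G s) t (dF + dG).
Proof.
  intros HF HG. apply isdC_intro.
  - cbn. eapply isdR_eq. apply (is_derive_plus (K:=R_AbsRing) (V:=R_NormedModule)).
    apply isdC_fst; exact HF. apply isdC_fst; exact HG. reflexivity.
  - cbn. eapply isdR_eq. apply (is_derive_plus (K:=R_AbsRing) (V:=R_NormedModule)).
    apply isdC_snd; exact HF. apply isdC_snd; exact HG. reflexivity.
Qed.

Lemma isdC_mult F G t dF dG : isdC F t dF -> isdC G t dG ->
  isdC (fun s => F s * G s) t (dF * G t + F t * dG).
Proof.
  intros HF HG.
  pose proof (isdC_fst _ _ _ HF) as F1. pose proof (isdC_snd _ _ _ HF) as F2.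
  pose proof (isdC_fst _ _ _ HG) as G1. pose proof (isdC_snd _ _ _ HG) as G2.
  apply isdC_intro.
  - cbn. eapply isdR_eq. apply (is_derive_minus (K:=R_AbsRing) (V:=R_NormedModule)).
    apply (is_derive_mult (K:=R_AbsRing)); [exact F1|exact G1|intros; apply Rmult_comm].
    apply (is_derive_mult (K:=R_AbsRing)); [exact F2|exact G2|intros; apply Rmult_comm].
    cbn. unfold minus, plus, opp, mult; cbn. ring.
  - cbn. eapply isdR_eq. apply (is_derive_plus (K:=R_AbsRing) (V:=R_NormedModule)).
    apply (is_derive_mult (K:=R_AbsRing)); [exact F1|exact G2|intros; apply Rmult_comm].
    apply (is_derive_mult (K:=R_AbsRing)); [exact F2|exact G1|intros; apply Rmult_comm].
    cbn. unfold minus, plus, opp, mult; cbn. ring.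
Qed.

Lemma isdC_const (c : C) t : isdC (fun _ => c) t 0.
Proof.
  apply isdC_intro; cbn; apply (is_derive_const (K:=R_AbsRing) (V:=R_NormedModule)).
Qed.

Lemma path0 (w v : C) : w + RtoC 0 * v = w.
Proof. destruct w, v; apply injective_projections; simpl; ring. Qed.

Lemma isdC_RtoC t : isdC (fun s => RtoC s) t 1.
Proof.
  apply isdC_intro; cbn.
  - apply (is_derive_id (K:=R_AbsRing)).
  - apply (is_derive_const (K:=R_AbsRing) (V:=R_NormedModule)).
Qed.

Lemma isdC_path (w v : C) : isdC (fun s => w + RtoC s * v) 0 v.
Proof.
  eapply isdC_eq. apply isdC_plus. apply isdC_const. apply isdC_mult. apply isdC_RtoC. apply isdC_const.
  destruct v; apply injective_projections; simpl; ring.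
Qed.

Lemma isdC_conj F t d : isdC F t d -> isdC (fun s => Cconj (F s)) t (Cconj d).
Proof.
  intros H. apply isdC_intro; cbn.
  - apply isdC_fst; exact H.
  - apply (is_derive_opp (K:=R_AbsRing) (V:=R_NormedModule)). apply isdC_snd; exact H.
Qed.

Lemma Cinv_real (x : R) : / RtoC x = RtoC (/ x).
Proof.
  destruct (Req_dec x 0) as [->|Hx].
  - rewrite Rinv_0. apply injective_projections; simpl; unfold Rdiv; ring_simplify; try rewrite Rinv_0; ring.
  - symmetry. apply RtoC_inv. exact Hx.
Qed.

Lemma isdC_inv_real G t d : isdC G t d -> (forall s, snd (G s) = 0%R) -> fst (G t) <> 0%R ->
  isdC (fun s => / G s) t (- d / (G t * G t)).
Proof.
  intros H Hr Hn.
  assert (Hd : snd d = 0%R).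
  { pose proof (isdC_snd _ _ _ H) as H2.
    assert (H3 : is_derive (fun s => snd (G s)) t 0%R).
    { eapply is_derive_ext. intros s. symmetry. apply Hr. apply (is_derive_const (K:=R_AbsRing) (V:=R_NormedModule)). }
    rewrite <- (is_derive_unique _ _ _ H2). exact (is_derive_unique _ _ _ H3). }
  assert (HG : forall s, G s = RtoC (fst (G s))).
  { intros s. specialize (Hr s). destruct (G s); simpl in *; subst; reflexivity. }
  assert (Hd' : d = RtoC (fst d)). { destruct d; simpl in *; subst; reflexivity. }
  apply isdC_ext with (f := fun s => RtoC (/ fst (G s))).
  { intros s. rewrite (HG s) at 2. rewrite Cinv_real. reflexivity. }
  apply isdC_eq with (l := RtoC (- fst d / (fst (G t))^2)). apply isdC_intro; cbn.
  - apply is_derive_inv. apply isdC_fst; exact H. exact Hn.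
  - apply (is_derive_const (K:=R_AbsRing) (V:=R_NormedModule)).
  - rewrite Hd', (HG t). rewrite <- RtoC_mult, <- RtoC_opp, <- RtoC_div.
    + simpl. rewrite Rmult_1_r. reflexivity.
    + apply Rmult_integral_contrapositive_currified; exact Hn.
Qed.

Definition HasD (F A B : C -> C) : Prop :=
  forall w, (Cmod w < 1)%R -> forall v,
    isdC (fun s => F (w + RtoC s * v)) 0 (A w * v + B w * Cconj v).

Lemma HasD_ext F A B A' B' : HasD F A B ->
  (forall w, (Cmod w < 1)%R -> A w = A' w /\ B w = B' w) -> HasD F A' B'.
Proof.
  intros H He w Hw v. destruct (He w Hw) as [<- <-]. apply H; auto.
Qed.

Lemma HasD_const c : HasD (fun _ => c) (fun _ => 0) (fun _ => 0).
Proof.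
  intros w Hw v. eapply isdC_eq. apply isdC_const. ring.
Qed.

Lemma HasD_id : HasD (fun w => w) (fun _ => 1) (fun _ => 0).
Proof.
  intros w Hw v. eapply isdC_eq. apply isdC_path. ring.
Qed.

Lemma HasD_conj : HasD Cconj (fun _ => 0) (fun _ => 1).
Proof.
  intros w Hw v. eapply isdC_eq. apply isdC_conj. apply isdC_path. ring.
Qed.

Lemma HasD_plus F G AF BF AG BG : HasD F AF BF -> HasD G AG BG ->
  HasD (fun w => F w + G w) (fun w => AF w + AG w) (fun w => BF w + BG w).
Proof.
  intros HF HG w Hw v. eapply isdC_eq. apply isdC_plus. apply HF; auto. apply HG; auto. ring.
Qed.

Lemma HasD_mult F G AF BF AG BG : HasD F AF BF -> HasD G AG BG ->
  HasD (fun w => F w * G w) (fun w => AF w * G w + F w * AG w) (fun w => BF w * G w + F w * BG w).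
Proof.
  intros HF HG w Hw v. eapply isdC_eq. apply isdC_mult. apply HF; auto. apply HG; auto.
  cbv beta. rewrite !path0. ring.
Qed.

Definition E (w : C) : C := / (1 - w * Cconj w).

Lemma snd_1mconj (x : C) : snd (1 - x * Cconj x) = 0%R.
Proof. destruct x; simpl; ring. Qed.

Lemma fst_1mconj (x : C) : fst (1 - x * Cconj x) = (1 - Cmod x ^ 2)%R.
Proof. destruct x as [x1 x2]; unfold Cmod. rewrite pow2_sqrt. simpl. ring.
  apply Rplus_le_le_0_compat; apply pow2_ge_0. Qed.

Lemma Cmod_lt1_ne (w : C) : (Cmod w < 1)%R -> (1 - Cmod w ^ 2)%R <> 0%R.
Proof. intros H. pose proof (Cmod_ge_0 w). nra. Qed.

Lemma onem_ne (w : C) : (Cmod w < 1)%R -> 1 - w * Cconj w <> 0.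
Proof.
  intros H He. apply (Cmod_lt1_ne w H). rewrite <- fst_1mconj, He. reflexivity.
Qed.



Lemma isdC_G (w v : C) : isdC (fun s => 1 - (w + RtoC s * v) * Cconj (w + RtoC s * v)) 0
   (- (v * Cconj w + w * Cconj v)).
Proof.
  apply isdC_ext with (f := fun s => 1 + (-1) * ((w + RtoC s * v) * Cconj (w + RtoC s * v))).
  { intros s. ring. }
  eapply isdC_eq.
  apply isdC_plus. apply isdC_const.
  apply isdC_mult. apply isdC_const.
  apply isdC_mult. apply isdC_path. apply isdC_conj. apply isdC_path.
  cbv beta. rewrite !path0. ring.
Qed.

Lemma HasD_E : HasD E (fun w => Cconj w * (E w * E w)) (fun w => w * (E w * E w)).
Proof.
  intros w Hw v. unfold E.
  pose proof (isdC_G w v) as HG.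
  pose proof (isdC_inv_real _ _ _ HG) as H.
  assert (Hr : forall s, snd (1 - (w + RtoC s * v) * Cconj (w + RtoC s * v)) = 0%R).
  { intros s. apply snd_1mconj. }
  specialize (H Hr).
  assert (Hn : fst (1 - (w + RtoC 0 * v) * Cconj (w + RtoC 0 * v)) <> 0%R).
  { rewrite path0, fst_1mconj. apply Cmod_lt1_ne; auto. }
  specialize (H Hn).
  eapply isdC_eq. exact H.
  cbv beta. rewrite !path0. pose proof (onem_ne w Hw).
  field. auto.
Qed.

Lemma HasD_extF F F' A B : (forall w, F w = F' w) -> HasD F A B -> HasD F' A B.
Proof. intros He H w Hw v. eapply isdC_ext. 2: apply H; auto. intros s; apply He. Qed.

Definition Qf (a ic : C) (w : C) : C := (a - Cconj a * w) * (Cconj a - a * Cconj w) * ic * E w.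
Definition QA (a ic : C) (w : C) : C :=
  - ((Cconj a - a * Cconj w) * (Cconj a - a * Cconj w)) * (E w * E w) * ic.
Definition QB (a ic : C) (w : C) : C :=
  - ((a - Cconj a * w) * (a - Cconj a * w)) * (E w * E w) * ic.

Lemma HasD_lin (p q : C) : HasD (fun w => p + q * w) (fun _ => q) (fun _ => 0).
Proof.
  eapply HasD_ext. apply HasD_plus. apply HasD_const. apply HasD_mult. apply HasD_const. apply HasD_id.
  intros w _. split; ring.
Qed.

Lemma HasD_linc (p q : C) : HasD (fun w => p + q * Cconj w) (fun _ => 0) (fun _ => q).
Proof.
  eapply HasD_ext. apply HasD_plus. apply HasD_const. apply HasD_mult. apply HasD_const. apply HasD_conj.
  intros w _. split; ring.
Qed.

Lemma HasD_Q a ic : HasD (Qf a ic) (QA a ic) (QB a ic).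
Proof.
  apply HasD_extF with (F := fun w => ((a + (- Cconj a) * w) * (Cconj a + (- a) * Cconj w)) * ic * E w).
  { intros w. unfold Qf. ring. }
  eapply HasD_ext.
  apply HasD_mult. apply HasD_mult. apply HasD_mult. apply HasD_lin. apply HasD_linc.
  apply HasD_const. apply HasD_E.
  intros w Hw. pose proof (onem_ne w Hw). unfold QA, QB, E. split; field; auto.
Qed.

Lemma snd_mult_real x y : snd x = 0%R -> snd y = 0%R -> snd (x * y) = 0%R.
Proof. destruct x, y; simpl; intros -> ->; ring. Qed.
Lemma snd_conj_prod x : snd (x * Cconj x) = 0%R.
Proof. destruct x; simpl; ring. Qed.
Lemma snd_inv_real x : snd x = 0%R -> snd (/ x) = 0%R.
Proof. destruct x; simpl; intros ->. unfold Rdiv. ring. Qed.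

Lemma Qf_real a ic w : snd ic = 0%R -> snd (Qf a ic w) = 0%R.
Proof.
  intros Hic. unfold Qf. apply snd_mult_real. apply snd_mult_real.
  - replace (Cconj a - a * Cconj w) with (Cconj (a - Cconj a * w)).
    apply snd_conj_prod. rewrite Cminus_conj, Cmult_conj, Cconj_conj. reflexivity.
  - exact Hic.
  - unfold E. apply snd_inv_real. apply snd_1mconj.
Qed.

Definition PhiOK (phi : nat -> C -> C) : Prop :=
  forall k (γ : R -> C) d, isdC γ 0 d -> (forall s, snd (γ s) = 0%R) ->
    isdC (fun s => phi k (γ s)) 0 (phi (S k) (γ 0%R) * d).

Lemma HasD_phi phi a ic k : PhiOK phi -> snd ic = 0%R ->
  HasD (fun w => phi k (Qf a ic w)) (fun w => phi (S k) (Qf a ic w) * QA a ic w)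
     (fun w => phi (S k) (Qf a ic w) * QB a ic w).
Proof.
  intros Hphi Hic w Hw v.
  pose proof (HasD_Q a ic w Hw v) as HQ.
  pose proof (Hphi k (fun s => Qf a ic (w + RtoC s * v)) _ HQ) as H.
  eapply isdC_eq. apply H. intros s. apply Qf_real; auto.
  cbv beta. rewrite path0. ring.
Qed.

Lemma dir_Derive F A B H w v : HasD F A B -> (forall x, (Cmod x < 1)%R -> H x = F x) ->
  (Cmod w < 1)%R -> Cmod v = 1%R ->
  Derive (fun t => fst (H (w + RtoC t * v))) 0 = fst (A w * v + B w * Cconj v) /\
  Derive (fun t => snd (H (w + RtoC t * v))) 0 = snd (A w * v + B w * Cconj v).
Proof.
  intros HF HH Hw Hv.
  assert (Hloc : locally 0%R (fun t => H (w + RtoC t * v) = F (w + RtoC t * v))).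
  { assert (He : (0 < 1 - Cmod w)%R) by lra.
    exists (mkposreal _ He). intros t Ht. apply HH.
    eapply Rle_lt_trans. apply Cmod_triangle. rewrite Cmod_mult, Hv, Cmod_R, Rmult_1_r.
    change (Rabs (t - 0) < 1 - Cmod w)%R in Ht. rewrite Rminus_0_r in Ht. simpl. lra. }
  pose proof (HF w Hw v) as Hd.
  split.
  - rewrite (Derive_ext_loc _ (fun t => fst (F (w + RtoC t * v)))).
    apply is_derive_unique. apply isdC_fst. exact Hd.
    eapply filter_imp. 2: exact Hloc. intros t ->. reflexivity.
  - rewrite (Derive_ext_loc _ (fun t => snd (F (w + RtoC t * v)))).
    apply is_derive_unique. apply isdC_snd. exact Hd.
    eapply filter_imp. 2: exact Hloc. intros t ->. reflexivity.
Qed.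

Lemma wirt_HasD F A B H : HasD F A B -> (forall x, (Cmod x < 1)%R -> H x = F x) ->
  forall w, (Cmod w < 1)%R -> wirt H w = A w.
Proof.
  intros HF HH w Hw.
  destruct (dir_Derive F A B H w 1 HF HH Hw) as [H1 H2].
  { rewrite Cmod_1. reflexivity. }
  destruct (dir_Derive F A B H w Ci HF HH Hw) as [H3 H4].
  { apply Cmod_Ci. }
  unfold wirt, dX, dY, Re, Im.
  rewrite (Derive_ext (fun t => fst (H (w + RtoC t))) (fun t => fst (H (w + RtoC t * 1)))).
  2: { intros t. rewrite Cmult_1_r. reflexivity. }
  rewrite (Derive_ext (fun t => snd (H (w + RtoC t))) (fun t => snd (H (w + RtoC t * 1)))).
  2: { intros t. rewrite Cmult_1_r. reflexivity. }
  rewrite (Derive_ext (fun t => fst (H (w + Ci * RtoC t))) (fun t => fst (H (w + RtoC t * Ci)))).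
  2: { intros t. rewrite (Cmult_comm Ci). reflexivity. }
  rewrite (Derive_ext (fun t => snd (H (w + Ci * RtoC t))) (fun t => snd (H (w + RtoC t * Ci)))).
  2: { intros t. rewrite (Cmult_comm Ci). reflexivity. }
  rewrite H1, H2, H3, H4.
  rewrite <- !surjective_pairing.
  replace (Cconj Ci) with (- Ci) by (apply injective_projections; simpl; ring).
  destruct (A w) as [a1 a2], (B w) as [b1 b2]. apply injective_projections; simpl; field.
Qed.


Inductive Cls (phi : nat -> C -> C) (a ic : C) : (C -> C) -> Prop :=
| Cl_const c : Cls phi a ic (fun _ => c)
| Cl_id : Cls phi a ic (fun w => w)
| Cl_conj : Cls phi a ic Cconj
| Cl_E : Cls phi a ic E
| Cl_phi k : Cls phi a ic (fun w => phi k (Qf a ic w))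
| Cl_plus F G : Cls phi a ic F -> Cls phi a ic G -> Cls phi a ic (fun w => F w + G w)
| Cl_mult F G : Cls phi a ic F -> Cls phi a ic G -> Cls phi a ic (fun w => F w * G w)
| Cl_ext F G : (forall w, F w = G w) -> Cls phi a ic F -> Cls phi a ic G.

Lemma cls_D phi a ic : PhiOK phi -> snd ic = 0%R -> forall F, Cls phi a ic F ->
  exists A B, Cls phi a ic A /\ HasD F A B.
Proof.
  intros Hphi Hic F HF. induction HF.
  - exists (fun _ => 0), (fun _ => 0). split. apply Cl_const. apply HasD_const.
  - exists (fun _ => 1), (fun _ => 0). split. apply Cl_const. apply HasD_id.
  - exists (fun _ => 0), (fun _ => 1). split. apply Cl_const. apply HasD_conj.
  - exists (fun w => Cconj w * (E w * E w)), (fun w => w * (E w * E w)). split.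
    apply Cl_mult. apply Cl_conj. apply Cl_mult; apply Cl_E. apply HasD_E.
  - exists (fun w => phi (S k) (Qf a ic w) * QA a ic w), (fun w => phi (S k) (Qf a ic w) * QB a ic w).
    split. 2: apply HasD_phi; auto.
    apply Cl_mult. apply Cl_phi. unfold QA.
    apply Cl_mult. apply Cl_mult. 
    + apply Cl_ext with (F := fun w => (-1) * ((Cconj a + (-a) * Cconj w) * (Cconj a + (-a) * Cconj w))).
      intros w; ring.
      apply Cl_mult. apply Cl_const. apply Cl_mult; apply Cl_plus; try apply Cl_const; apply Cl_mult; try apply Cl_const; apply Cl_conj.
    + apply Cl_mult; apply Cl_E.
    + apply Cl_const.
  - destruct IHHF1 as (A1 & B1 & C1 & D1). destruct IHHF2 as (A2 & B2 & C2 & D2).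
    exists (fun w => A1 w + A2 w), (fun w => B1 w + B2 w). split. apply Cl_plus; auto.
    apply HasD_plus; auto.
  - destruct IHHF1 as (A1 & B1 & C1 & D1). destruct IHHF2 as (A2 & B2 & C2 & D2).
    exists (fun w => A1 w * G w + F w * A2 w), (fun w => B1 w * G w + F w * B2 w). split.
    apply Cl_plus; apply Cl_mult; auto.
    apply HasD_mult; auto.
  - destruct IHHF as (A & B & C1 & D1). exists A, B. split; auto.
    eapply HasD_extF. exact H. exact D1.
Qed.

Lemma HasD_pow F A B n : HasD F A B ->
  HasD (fun w => F w ^ n) (fun w => RtoC (INR n) * F w ^ (pred n) * A w)
                          (fun w => RtoC (INR n) * F w ^ (pred n) * B w).
Proof.
  intros HF. induction n.
  - eapply HasD_ext. apply (HasD_const 1). intros w _. change (INR 0) with 0%R. split; ring.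
  - eapply HasD_ext. eapply (HasD_extF (fun w => F w * F w ^ n)). 2: apply HasD_mult; [exact HF | exact IHn].
    intros w. reflexivity.
    intros w _. rewrite S_INR, RtoC_plus. change (pred (S n)) with n.
    destruct n as [|m].
    + change (INR 0) with 0%R. change (pred 0) with 0%nat. simpl Cpow. split; ring.
    + change (pred (S m)) with m. rewrite Cpow_S. split; ring.
Qed.

Definition XA (a ic : C) (w : C) : C :=
  -2 * ((Cconj a - a * Cconj w) * (Cconj a - a * Cconj w)) * (E w * E w * E w) * ic.

Lemma HasD_QA a ic : exists B, HasD (QA a ic) (fun w => Cconj w * XA a ic w) B.
Proof.
  eexists.
  eapply HasD_ext. eapply HasD_extF with (F := fun w => ((-1) * ((Cconj a + (-a) * Cconj w) * (Cconj a + (-a) * Cconj w))) * (E w * E w) * ic).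
  { intros w. unfold QA. ring. }
  apply HasD_mult. apply HasD_mult. apply HasD_mult. apply HasD_const.
  apply HasD_mult; apply HasD_linc. apply HasD_mult; apply HasD_E. apply HasD_const.
  intros w _. split. unfold XA. ring. reflexivity.
Qed.

Lemma Cls_P phi a ic : Cls phi a ic (fun w => Cconj a - a * Cconj w).
Proof.
  apply Cl_ext with (F := fun w => Cconj a + (-a) * Cconj w). intros; ring.
  apply Cl_plus. apply Cl_const. apply Cl_mult. apply Cl_const. apply Cl_conj.
Qed.

Lemma Cls_QA phi a ic : Cls phi a ic (QA a ic).
Proof.
  unfold QA. apply Cl_mult. apply Cl_mult.
  apply Cl_ext with (F := fun w => (-1) * ((Cconj a - a * Cconj w) * (Cconj a - a * Cconj w))). intros; ring.
  apply Cl_mult. apply Cl_const. apply Cl_mult; apply Cls_P.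
  apply Cl_mult; apply Cl_E. apply Cl_const.
Qed.

Lemma Cls_XA phi a ic : Cls phi a ic (XA a ic).
Proof.
  unfold XA. apply Cl_mult. apply Cl_mult. apply Cl_mult. apply Cl_const.
  apply Cl_mult; apply Cls_P.
  apply Cl_mult. apply Cl_mult; apply Cl_E. apply Cl_E. apply Cl_const.
Qed.

Lemma Cls_pow phi a ic F n : Cls phi a ic F -> Cls phi a ic (fun w => F w ^ n).
Proof.
  intros HF. induction n.
  - apply (Cl_const phi a ic 1).
  - apply Cl_ext with (F := fun w => F w * F w ^ n). intros; reflexivity.
    apply Cl_mult; auto.
Qed.

Lemma iter_inv phi a ic h : PhiOK phi -> snd ic = 0%R ->
  (forall w, (Cmod w < 1)%R -> h w = phi 0%nat (Qf a ic w)) -> forall n,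
  exists R, Cls phi a ic R /\ forall w, (Cmod w < 1)%R ->
    wirt_n n h w = phi n (Qf a ic w) * QA a ic w ^ n + Cconj w * R w.
Proof.
  intros Hphi Hic Hh n. induction n.
  - exists (fun _ => 0). split. apply Cl_const. intros w Hw. simpl. rewrite Hh; auto. ring.
  - destruct IHn as (R & HRc & HR).
    destruct (cls_D phi a ic Hphi Hic R HRc) as (AR & BR & HARc & HRD).
    destruct (HasD_QA a ic) as [BQ HQD].
    pose proof (HasD_plus _ _ _ _ _ _
       (HasD_mult _ _ _ _ _ _ (HasD_phi phi a ic n Hphi Hic) (HasD_pow _ _ _ n HQD))
       (HasD_mult _ _ _ _ _ _ HasD_conj HRD)) as HF.
    exists (fun w => phi n (Qf a ic w) * (RtoC (INR n) * QA a ic w ^ (pred n) * XA a ic w) + AR w).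
    split.
    + apply Cl_plus; auto. apply Cl_mult. apply Cl_phi. apply Cl_mult. apply Cl_mult. apply Cl_const.
      apply Cls_pow. apply Cls_QA. apply Cls_XA.
    + intros w Hw. change (wirt_n (S n) h w) with (wirt (wirt_n n h) w).
      rewrite (wirt_HasD _ _ _ _ HF HR w Hw). simpl. ring.
Qed.


Lemma onep_ne (x : C) : (Cmod x < 1)%R -> 1 + x <> 0.
Proof.
  intros H He. assert (x = -1). { replace x with ((1 + x) - 1) by ring. rewrite He. ring. }
  subst. rewrite Cmod_R, Rabs_left in H; lra.
Qed.

Lemma Cmod_prod_lt (x y : C) : (Cmod x < 1)%R -> (Cmod y < 1)%R -> (Cmod (x * y) < 1)%R.
Proof.
  intros Hx Hy. rewrite Cmod_mult. pose proof (Cmod_ge_0 x). pose proof (Cmod_ge_0 y). nra.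
Qed.

Lemma RtoC_onem (x : C) : RtoC (1 - Cmod x ^ 2) = 1 - x * Cconj x.
Proof. rewrite RtoC_minus, Cmod2_conj. reflexivity. Qed.

Lemma qfun_Tz z w : (Cmod z < 1)%R -> (Cmod w < 1)%R ->
  qfun (Tz z w) = Qf (1 - z) (/ RtoC (1 - Cmod z ^ 2)) w.
Proof.
  intros Hz Hw.
  assert (H1 : 1 + Cconj z * w <> 0). { apply onep_ne, Cmod_prod_lt; auto. rewrite Cmod_conj; auto. }
  assert (H2 : 1 + z * Cconj w <> 0). { apply onep_ne, Cmod_prod_lt; auto. rewrite Cmod_conj; auto. }
  assert (H3 : 1 - z * Cconj z <> 0) by (apply onem_ne; auto).
  assert (H4 : 1 - w * Cconj w <> 0) by (apply onem_ne; auto).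
  assert (HT : Cconj (Tz z w) = (Cconj z + Cconj w) / (1 + z * Cconj w)).
  { unfold Tz. rewrite Cdiv_conj; auto. rewrite Cplus_conj, Cplus_conj, Cmult_conj, Cconj_conj.
    replace (Cconj 1) with (RtoC 1) by (apply injective_projections; simpl; ring). reflexivity. }
  assert (HN : 1 - Tz z w * Cconj (Tz z w) = (1 - z * Cconj z) * (1 - w * Cconj w) / ((1 + Cconj z * w) * (1 + z * Cconj w))).
  { rewrite HT. unfold Tz. field. auto. }
  assert (HN' : (1 - Cmod (Tz z w) ^ 2)%R <> 0%R).
  { intros He. assert (H0 : RtoC (1 - Cmod (Tz z w) ^ 2) = 0) by (rewrite He; reflexivity).
    rewrite RtoC_onem in H0.
    assert (H5 : (1 - z * Cconj z) * (1 - w * Cconj w) = (1 - Tz z w * Cconj (Tz z w)) * ((1 + Cconj z * w) * (1 + z * Cconj w))).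
    { rewrite HN. field. auto. }
    rewrite H0, Cmult_0_l in H5. revert H5. apply Cmult_neq_0; auto. }
  unfold qfun, Qf, E. rewrite RtoC_div; auto. rewrite !RtoC_onem, Cmod2_conj.
  rewrite HN. rewrite !Cminus_conj, HT.
  replace (Cconj 1) with (RtoC 1) by (apply injective_projections; simpl; ring).
  unfold Tz. field. auto.
Qed.

Lemma real_path_d γ d : isdC γ 0 d -> (forall s, snd (γ s) = 0%R) -> snd d = 0%R.
Proof.
  intros H Hr. pose proof (isdC_snd _ _ _ H) as H2.
  assert (H3 : is_derive (fun s => snd (γ s)) 0 0%R).
  { eapply is_derive_ext. intros s. symmetry. apply Hr. apply (is_derive_const (K:=R_AbsRing) (V:=R_NormedModule)). }
  rewrite <- (is_derive_unique _ _ _ H2). exact (is_derive_unique _ _ _ H3).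
Qed.

Lemma PhiOK1 g : entire g -> PhiOK (fun k => Cderiv_n k g).
Proof.
  intros Hg k γ d Hd Hr. eapply isdC_eq. apply chain. apply C_derive_correct. exact 0. apply Hg. exact Hd.
  reflexivity.
Qed.

Lemma PhiOK2 g : entire g -> PhiOK (fun k x => Cconj (Cderiv_n k g x)).
Proof.
  intros Hg k γ d Hd Hr. eapply isdC_eq. apply isdC_conj. apply chain. apply C_derive_correct. exact 0. apply Hg. exact Hd.
  rewrite Cmult_conj. f_equal. pose proof (real_path_d _ _ Hd Hr). destruct d; simpl in *; subst.
  apply injective_projections; simpl; ring.
Qed.

Lemma Cconj0 : Cconj 0 = 0.
Proof. apply injective_projections; simpl; ring. Qed.

Lemma E0 : E 0 = 1.
Proof. unfold E. rewrite Cconj0. replace (1 - 0 * 0) with (RtoC 1) by ring. rewrite Cinv_real, Rinv_1. reflexivity. Qed.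

Lemma conj_1m z : Cconj (1 - z) = 1 - Cconj z.
Proof. rewrite Cminus_conj. f_equal. apply injective_projections; simpl; ring. Qed.

Lemma qfun_eq z : (Cmod z < 1)%R -> qfun z = (1 - z) * (1 - Cconj z) * / RtoC (1 - Cmod z ^ 2).
Proof.
  intros Hz. unfold qfun. rewrite RtoC_div. rewrite Cmod2_conj, conj_1m. reflexivity.
  apply Cmod_lt1_ne; auto.
Qed.

Lemma Qf0 z : (Cmod z < 1)%R -> Qf (1 - z) (/ RtoC (1 - Cmod z ^ 2)) 0 = qfun z.
Proof.
  intros Hz. rewrite qfun_eq; auto. unfold Qf. rewrite E0, Cconj0, conj_1m. ring.
Qed.

Lemma QA0 z : QA (1 - z) (/ RtoC (1 - Cmod z ^ 2)) 0 =
   (-1) * ((1 - Cconj z) ^ 2) * / RtoC (1 - Cmod z ^ 2).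
Proof. unfold QA. rewrite E0, Cconj0, conj_1m. simpl Cpow. ring. Qed.

Lemma ic_real z : snd (/ RtoC (1 - Cmod z ^ 2)) = 0%R.
Proof. apply snd_inv_real. reflexivity. Qed.


Lemma Cconj_R (r : R) : Cconj (RtoC r) = RtoC r.
Proof. apply injective_projections; simpl; ring. Qed.

Lemma PM_formula g z n : entire g -> (Cmod z < 1)%R ->
  PM n (fun w => g (qfun w)) z =
    Cderiv_n n g (qfun z) * ((-1) * ((1 - Cconj z) ^ 2) * / RtoC (1 - Cmod z ^ 2)) ^ n.
Proof.
  intros Hg Hz.
  destruct (iter_inv (fun k => Cderiv_n k g) (1 - z) (/ RtoC (1 - Cmod z ^ 2))
     (fun u => g (qfun (Tz z u))) (PhiOK1 g Hg) (ic_real z)) with (n := n) as (R & _ & HR).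
  { intros w Hw. simpl. rewrite qfun_Tz; auto. }
  unfold PM. rewrite HR. 2: { rewrite Cmod_0. lra. }
  rewrite Qf0, QA0, Cconj0; auto. ring.
Qed.

Lemma PMbar_formula g z n : entire g -> (Cmod z < 1)%R ->
  PMbar n (fun w => g (qfun w)) z =
    Cderiv_n n g (qfun z) * ((-1) * ((1 - z) ^ 2) * / RtoC (1 - Cmod z ^ 2)) ^ n.
Proof.
  intros Hg Hz.
  destruct (iter_inv (fun k x => Cconj (Cderiv_n k g x)) (1 - z) (/ RtoC (1 - Cmod z ^ 2))
     (fun u => Cconj (g (qfun (Tz z u)))) (PhiOK2 g Hg) (ic_real z)) with (n := n) as (R & _ & HR).
  { intros w Hw. simpl. rewrite qfun_Tz; auto. }
  unfold PMbar, PM. rewrite HR. 2: { rewrite Cmod_0. lra. }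
  rewrite Qf0, QA0, Cconj0; auto.
  rewrite Cmult_0_l, Cplus_0_r, Cmult_conj, Cconj_conj, Cpow_conj. f_equal. f_equal.
  rewrite !Cmult_conj, Cpow_conj, conj_1m, Cconj_conj, Cinv_conj.
  - rewrite !Cconj_R. reflexivity.
  - intros H. apply (Cmod_lt1_ne z Hz). apply RtoC_inj. exact H.
Qed.

Lemma pow_form (x c : C) n : c <> 0 -> ((-1) * x ^ 2 * / c) ^ n = (-1) ^ n * x ^ (2 * n) / c ^ n.
Proof.
  intros Hc. rewrite !Cpow_mult_l, Cpow_inv by exact Hc. rewrite Cpow_mult_r. unfold Cdiv. ring.
Qed.

Theorem mainTheorem15 (g gt : C -> C) (Hg : entire g) (Hgt : entire gt) :
  forall (n : nat) (z : C), (Cmod z < 1)%R ->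
    PM n (fun w => g (qfun w)) z
      = (- 1) ^ n * (1 - Cconj z) ^ (2 * n) / (RtoC (1 - Cmod z ^ 2)) ^ n
        * Cderiv_n n g (qfun z)
    /\ PMbar n (fun w => g (qfun w)) z
      = (- 1) ^ n * (1 - z) ^ (2 * n) / (RtoC (1 - Cmod z ^ 2)) ^ n
        * Cderiv_n n g (qfun z)
    /\ PMbar n (fun w => g (qfun w)) z * PM n (fun w => gt (qfun w)) z
      = qfun z ^ (2 * n) * Cderiv_n n g (qfun z) * Cderiv_n n gt (qfun z).
Proof.
  intros n z Hz.
  assert (Hc : RtoC (1 - Cmod z ^ 2) <> 0).
  { intros H. apply (Cmod_lt1_ne z Hz). apply RtoC_inj. exact H. }
  split; [|split].
  - rewrite PM_formula, pow_form; auto. apply Cmult_comm.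
  - rewrite PMbar_formula, pow_form; auto. apply Cmult_comm.
  - rewrite PMbar_formula, PM_formula; auto.
    replace (qfun z ^ (2 * n)) with (((-1) * (1 - z) ^ 2 * / RtoC (1 - Cmod z ^ 2)) ^ n *
       ((-1) * (1 - Cconj z) ^ 2 * / RtoC (1 - Cmod z ^ 2)) ^ n).
    + generalize (((-1) * (1 - z) ^ 2 * / RtoC (1 - Cmod z ^ 2)) ^ n).
      generalize (((-1) * (1 - Cconj z) ^ 2 * / RtoC (1 - Cmod z ^ 2)) ^ n). intros; ring.
    + rewrite <- Cpow_mult_l, Cpow_mult_r. f_equal. rewrite qfun_eq; auto. generalize (RtoC (1 - Cmod z ^ 2)). intro r. simpl Cpow. replace (RtoC (-1)) with (- (1)) by (apply injective_projections; simpl; ring). ring.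
Qed.
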